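(* Consider the partial-block protocol without direct messaging described in the context, on a finite set of agents $A$ with a connected undirected connectivity graph $G=(A,E)$, and suppose the block length is $L=\Delta(G)+1$, where $\Delta(G)$ is the maximum degree of $G$. Then a deadlock never occurs: for every epoch $t$ it is not the case that $D(i)$ holds for all $i\in A$.
   Context: Let $A$ be a finite set of agents (agent IDs) and $G=(A,E)$ a connected undirected graph; $\Gamma_i$ denotes the set of neighbors of $i$ and $\Delta(G)$ the maximum vertex degree. Fix an integer $L\ge 1$ (block length). Each agent $i$ maintains a partial block $pb_i\subseteq A$ (a set of agent IDs). The system runs in epochs $t=0,1,2,\dots$; $pb_i^{(t)}$ is agent $i$'s partial block at the start of epoch $t$. In each epoch: (C1) every agent $i$ with $i\notin pb_i$ adds $i$ to $pb_i$; (C2) every agent $i$ sends its $pb_i$ to every neighbor $j\in\Gamma_i$. When an agent $i$ receives a partial block $P$ from a neighbor it applies the rule: if $|P\setminus\{i\}|>|pb_i\setminus\{i\}|$, agent $i$ sets $pb_i:=P$; otherwise the received block is discarded (in particular, there is no direct messaging to non-neighbors). All received partial blocks are assumed to pass all validity and similarity checks. For an agent $i$ and epoch $t$, the predicate $D(i)$ means: $pb_i^{(t)}=pb_i^{(t+1)}$ and $|pb_i^{(t)}|<L$. A deadlock at epoch $t$ means that $D(i)$ holds for all $i\in A$. *)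

(* Defs.v *)
From mathcomp Require Import all_boot.
Set Implicit Arguments. Unset Strict Implicit. Unset Printing Implicit Defensive.

Section Protocol.
Variable A : finType.

Definition connected_graph (e : rel A) : Prop :=
  [/\ symmetric e, irreflexive e, (exists a : A, True) & forall x y : A, connect e x y].

Definition nbrs (e : rel A) (i : A) : {set A} := [set j | e i j].

Definition max_degree (e : rel A) : nat := \max_(i : A) #|nbrs e i|.

Definition c1 (i : A) (b : {set A}) : {set A} := if i \in b then b else i |: b.

Definition receive (i : A) (b P : {set A}) : {set A} :=
  if #|P :\ i| > #|b :\ i| then P else b.

(* One epoch: every agent performs (C1); then (C2) every agent j sends its
   (post-C1) block to each neighbour; agent i processes the blocks received
   from its neighbours one after another, in an arbitrary order s. *)
Definition epoch_step (e : rel A) (pb pb' : A -> {set A}) : Prop :=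
  forall i : A, exists s : seq A,
    perm_eq s (enum (nbrs e i)) /\
    pb' i = foldl (fun b j => receive i b (c1 j (pb j))) (c1 i (pb i)) s.

(* pb t i = pb_i^{(t)}: a run of the protocol from an arbitrary initial state. *)
Definition execution (e : rel A) (pb : nat -> A -> {set A}) : Prop :=
  forall t, epoch_step e (pb t) (pb t.+1).

Definition D (L : nat) (pb : nat -> A -> {set A}) (t : nat) (i : A) : Prop :=
  pb t i = pb t.+1 i /\ #|pb t i| < L.

Definition deadlock (L : nat) (pb : nat -> A -> {set A}) (t : nat) : Prop :=
  forall i : A, D L pb t i.

End Protocol.

(* Main.v *)
Require Import Defs.
From mathcomp Require Import all_boot.
From mathcomp Require Import zify.

Lemma fold_props (A : finType) (i : A) (P : A -> {set A}) (s : seq A) (b : {set A}) :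
  let r := foldl (fun b j => receive i b (P j)) b s in
  #|b :\ i| <= #|r :\ i| /\ (forall j, j \in s -> #|P j :\ i| <= #|r :\ i|) /\
  (r = b \/ exists2 j, j \in s & r = P j).
Proof.
elim: s b => [|j s IH] b /=.
  by split=> //; split=> //; left.
have [h1 [h2 h3]] := IH (receive i b (P j)).
have hb : #|b :\ i| <= #|receive i b (P j) :\ i| /\ #|P j :\ i| <= #|receive i b (P j) :\ i|.
  rewrite /receive; case: ifP => h; split => //; lia.
split; first by case: hb => ? ?; lia.
split.
  move=> k; rewrite inE => /orP [/eqP -> | ks]; first by case: hb => ? ?; lia.
  exact: h2.
case: h3 => [-> | [k ks ->]]; last by right; exists k => //; rewrite inE ks orbT.
rewrite /receive; case: ifP => _; first by right; exists j => //; rewrite inE eqxx.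
by left.
Qed.

Lemma c1E (A : finType) (j : A) b : c1 j b = j |: b.
Proof.
rewrite /c1; case: ifP => // h; apply/setP => x; rewrite in_setU1.
by case: eqP => // ->; rewrite h.
Qed.

Lemma setU1D1 (A : finType) (i : A) b : (i |: b) :\ i = b :\ i.
Proof. by apply/setP => x; rewrite !inE; case: eqP. Qed.

Theorem theorem2 (A : finType) (e : rel A) (pb : nat -> A -> {set A}) :
  connected_graph e -> execution e pb ->
  forall t : nat, ~ deadlock (max_degree e).+1 pb t.
Proof.
move=> [sym irr [a _] conn] exe t dl.
have esy : forall x y, e x y -> e y x by move=> x y; rewrite sym.
pose Q x := x |: pb t x.
have key : forall i, (forall j, e i j -> #|Q j :\ i| <= #|Q i :\ i|) /\
                     (pb t i = Q i \/ exists j, pb t i = Q j).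
  move=> i; have [s [hs hpb]] := exe t i.
  have := @fold_props A i (fun j => c1 j (pb t j)) s (c1 i (pb t i)).
  rewrite /= -hpb -(dl i).1 !c1E => [[h1 [h2 h3]]].
  split.
    move=> j eij; rewrite /Q setU1D1 -c1E; apply: h2.
    by rewrite (perm_mem hs) mem_enum inE.
  case: h3 => [-> | [j _ ->]]; [by left | right; exists j].
  by rewrite c1E.
pose x0 := [arg max_(x > a) #|Q x|].
have hmax : forall y, #|Q y| <= #|Q x0|.
  rewrite /x0; case: arg_maxnP => //= x _ H y; exact: H.
set M := #|Q x0| in hmax.
have step : forall i j, e i j -> #|Q i| = M -> #|Q j| = M.
  move=> i j eij hi.
  have := (key j).1 i (esy _ _ eij).
  have := cardsD1 j (Q j); have := cardsD1 j (Q i); have := hmax j.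
  have jQ : j \in Q j by rewrite /Q setU11.
  rewrite jQ; case: (j \in Q i) => /=; lia.
have allM : forall x, #|Q x| = M.
  move=> x.
  have hc : closed e [pred y | #|Q y| == M].
    move=> y z eyz /=; apply/idP/idP => /eqP h; apply/eqP.
      exact: step h.
    exact: step (esy _ _ eyz) h.
  have := closed_connect hc (conn x0 x); rewrite !inE /= eqxx => /esym /eqP; exact.
have degM : forall i, #|nbrs e i| < M.
  move=> i.
  have sub : i |: nbrs e i \subset Q i.
    apply/subsetP => j; rewrite in_setU1 inE => /orP [/eqP -> | eij].
      by rewrite /Q setU11.
    apply/negPn/negP => nj.
    have := (key j).1 i (esy _ _ eij).
    have := cardsD1 j (Q j); have := cardsD1 j (Q i).
    rewrite (negbTE nj) allM allM /Q setU11 /=; lia.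
  have := subset_leq_card sub; rewrite cardsU1 inE irr /=.
  by rewrite -/(Q i) allM.
have hD : max_degree e < M.
  have := degM a.
  have : max_degree e <= M.-1.
    by apply/bigmax_leqP => i _; have := degM i; lia.
  lia.
have [_ hl] := dl a.
case: (key a).2 => [h | [k h]]; rewrite h allM in hl; lia.
Qed.
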